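(* Let $\mathbf{k}$ be a commutative unital ring, $R$ a $\mathbf{k}$-algebra, $\lambda\in\mathbf{k}$, and $P$ a Rota-Baxter operator of weight $\lambda$ on $R$. Let $\tilde P:=-\lambda\,\mathrm{id}_R-P$. (1) For all $a,b\in\mathbf{k}$, the operator $Q:=aP+b\tilde P$ is an extended Rota-Baxter operator of weight $(\lambda(a+b),ab\lambda^2)$. (2) Let $\mu,\kappa\in\mathbf{k}$ and let $a,b\in\mathbf{k}$ be the roots of $t^2-\mu t+\kappa$ (so $t^2-\mu t+\kappa=(t-a)(t-b)$). Then $Q:=aP+b\tilde P$ is an extended Rota-Baxter operator of weight $(\mu\lambda,\kappa\lambda^2)$. In particular, if $P$ is a Rota-Baxter operator of weight $1$, then $Q$ is an extended Rota-Baxter operator of weight $(\mu,\kappa)$.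
   Context: A Rota-Baxter operator of weight $\lambda$ on a $\mathbf{k}$-algebra $R$ is a $\mathbf{k}$-linear map $P:R\to R$ with $P(x)P(y)=P(xP(y))+P(P(x)y)+\lambda P(xy)$ for all $x,y\in R$. For $\lambda,\kappa\in\mathbf{k}$, an extended Rota-Baxter operator of weight $(\lambda,\kappa)$ on $R$ is a $\mathbf{k}$-linear map $P:R\to R$ such that $P(x)P(y)=P(xP(y))+P(P(x)y)+\lambda P(xy)+\kappa xy$ for all $x,y\in R$. *)

(* Defs.v *)
From HB Require Import structures.
From mathcomp Require Import all_boot all_order all_algebra.
Set Implicit Arguments. Unset Strict Implicit. Unset Printing Implicit Defensive.
Import GRing.Theory.
Local Open Scope ring_scope.

Definition is_RB (k : comPzRingType) (R : algType k) (lam : k) (P : R -> R) : Prop :=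
  forall x y : R, P x * P y = P (x * P y) + P (P x * y) + lam *: P (x * y).

Definition is_ERB (k : comPzRingType) (R : algType k) (lam kap : k) (P : R -> R) : Prop :=
  forall x y : R,
    P x * P y = P (x * P y) + P (P x * y) + lam *: P (x * y) + kap *: (x * y).

Definition RBtilde (k : comPzRingType) (R : algType k) (lam : k) (P : R -> R) : R -> R :=
  fun x => - (lam *: x) - P x.

Definition RBcomb (k : comPzRingType) (R : algType k) (lam a b : k) (P : R -> R) : R -> R :=
  fun x => a *: P x + b *: RBtilde lam P x.

(* Main.v *)
Require Import Defs.
From HB Require Import structures.
From mathcomp Require Import all_boot all_order all_algebra.
From mathcomp Require Import ring.
Import GRing.Theory.
Local Open Scope ring_scope.

Lemma Qform (k : comPzRingType) (R : algType k) (lam a b : k) (P : R -> R) x :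
  RBcomb lam a b P x = (a - b) *: P x + (- (b * lam)) *: x.
Proof.
rewrite /RBcomb /RBtilde scalerBr scalerN scalerA scalerBl scaleNr.
by rewrite addrA addrAC.
Qed.

Lemma gen (k : comPzRingType) (R : algType k) (lam : k)
    (P : {linear R -> R}) (HP : is_RB lam P) (a b : k) :
     is_ERB (lam * (a + b)) (a * b * lam ^+ 2) (RBcomb lam a b P).
Proof.
move=> x y; rewrite !Qform.
rewrite !(mulrDl, mulrDr, =^~scalerAl, =^~scalerAr, linearD, linearZ, scalerDr, scalerA) /=.
rewrite HP !(scalerDr, scalerA).
set A := P (x * P y). set B := P (P x * y). set C := P (x * y).
set D := x * P y. set E := P x * y. set F := x * y.
have e1 : (a - b) * (a - b) * lam = - (b * lam) * (a - b) + - (b * lam) * (a - b) + (a - b) * (lam * a + lam * b) by ring.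
have e2 : - (b * lam) * - (b * lam) = - (b * lam) * - (b * lam) + - (b * lam) * - (b * lam) + - (b * lam) * (lam * a + lam * b) + a * b * lam ^+ 2 by ring.
rewrite e1 {1}e2 (mulrC (a - b) (- (b * lam))) !scalerDl !addrA.
rewrite [LHS](ACl (1*3*7*8*2*4*6*9*5*10*11)).
done.
Qed.

Theorem corollary2p6 (k : comPzRingType) (R : algType k) (lam : k)
    (P : {linear R -> R}) (HP : is_RB lam P) :
  (forall a b : k,
     is_ERB (lam * (a + b)) (a * b * lam ^+ 2) (RBcomb lam a b P))
  /\
  (forall mu kap a b : k,
     (forall t : k, t ^+ 2 - mu * t + kap = (t - a) * (t - b)) ->
     is_ERB (mu * lam) (kap * lam ^+ 2) (RBcomb lam a b P)
     /\ (lam = 1 -> is_ERB mu kap (RBcomb lam a b P))).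
Proof.
split; first exact: gen.
move=> mu kap a b H.
have hk : kap = a * b.
  transitivity (0 ^+ 2 - mu * 0 + kap); first by ring.
  by rewrite H; ring.
have hm : mu = a + b.
  transitivity (1 + kap - (1 ^+ 2 - mu * 1 + kap)); first by ring.
  by rewrite H hk; ring.
have G := @gen k R lam P HP a b.
split.
  by rewrite hm hk mulrC.
move=> l1; have := G; rewrite l1 hm hk expr1n !mulr1 mul1r.
done.
Qed.
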